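(* For every $t=0,1,\dots,T-2$, $H_t(\bar I_t-\theta)>H_t(I_t)+K_t$.
   Context: Model. Fix an integer horizon $T\ge 2$, a discount factor $\alpha\in(0,1]$, and for $t=0,\dots,T-1$: unit ordering costs $c_t\in\mathbb R$, a salvage coefficient $c_T\in\mathbb R$, setup costs $K_t\ge 0$, functions $G_t:\mathbb R\to\mathbb R$, and independent nonnegative random demands $D_0,\dots,D_{T-1}$ with right-continuous distribution functions $F_t$ and finite means; all expectations appearing are assumed finite. Put $C_t(y)=(c_t-\alpha c_{t+1})y+G_t(y)+\alpha c_{t+1}E[D_t]$. Standing assumptions: (i) each $C_t$ is convex with $C_t(y)\to+\infty$ as $|y|\to\infty$; (ii) $K_t\ge \alpha K_{t+1}$ for $t=0,\dots,T-2$. Grid construction. Fix $\theta>0$, $z_m=m\theta$, $Z_\theta=\{z_m:m\in\mathbb Z\}$, $f_t(n)=F_t(z_{n+1})-F_t(z_n)$ ($n\ge -1$). $C^m_t=\min\{y: C_t(y)=\min_x C_t(x)\}$; with $z_{n_0}<C^m_t\le z_{n_0+1}$, $S^U_t=\min\{z_m\in Z_\theta: z_m\ge C^m_t,\ C_t(z_m)>C_t(z_{n_0})+K_t\}$. $s_{T-1}$ is a point with $s_{T-1}\le C^m_{T-1}$, $C_{T-1}(s_{T-1})=C_{T-1}(C^m_{T-1})+K_{T-1}$; $\bar I_{T-1}=s_{T-1}$. For $t=T-2,\dots,0$: $I_t=\max\{z_m\in Z_\theta: z_m<\min(\bar I_{t+1}-\theta,C^m_t)\}$, $\bar I_t=\max\{z_m\in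 Z_\theta: z_m\le I_t,\ C_t(z_m)>C_t(I_t)+K_t\}+\theta$. $H_{T-1}=C_{T-1}$, $S_{T-1}=C^m_{T-1}$; $V_t(y)=H_t(S_t)+K_t$ for $y<s_t$, $V_t(y)=H_t(y)$ for $y\ge s_t$. For $t=T-2,\dots,0$: $H_t(y)=C_t(y)+\alpha\sum_{n=-1}^\infty V_{t+1}(y-z_n)f_t(n)$; $S_t=\max\{z_m\in Z_\theta: I_t\le z_m\le S^U_t,\ H_t(z_m)=\min\{H_t(z_n):z_n\in Z_\theta, I_t\le z_n\le S^U_t\}\}$; $s_t=S_t$ if $K_t=0$, else $s_t=\min\{z_m\in Z_\theta:\bar I_t\le z_m\le S_t,\ H_t(z_m)\le H_t(S_t)+K_t\}$. *)

(* Defs.v *)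
From HB Require Import structures.
From mathcomp Require Import all_boot all_order all_algebra.
From mathcomp Require Import all_classical all_reals all_analysis.
Set Implicit Arguments. Unset Strict Implicit. Unset Printing Implicit Defensive.
Import Order.TTheory GRing.Theory Num.Theory.
Import numFieldNormedType.Exports.
Local Open Scope classical_set_scope.
Local Open Scope ring_scope.

(* The minimum / maximum of a set (xget picks the unique least / greatest
   element when it exists; the default 0 is only returned when it does not). *)
Definition minR {R : realType} (A : set R) : R :=
  xget 0 [set x | A x /\ forall y, A y -> x <= y].
Definition minZ (A : set int) : int :=
  xget 0 [set m | A m /\ forall n, A n -> (m <= n)%R].
Definition maxZ (A : set int) : int :=
  xget 0 [set m | A m /\ forall n, A n -> (n <= m)%R].

Section Model.
Variables (R : realType) (d : measure_display) (Omega : measurableType d)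
  (P : probability Omega R).
Variables (T : nat) (alpha theta : R) (c K : nat -> R) (G : nat -> R -> R)
  (D : nat -> {RV P >-> R}).

Definition Fd (t : nat) (x : R) : R := fine (P [set w | D t w <= x]).
Definition meanD (t : nat) : R := fine ('E_P[D t]).

Definition Cfun (t : nat) (y : R) : R :=
  (c t - alpha * c t.+1) * y + G t y + alpha * c t.+1 * meanD t.

Definition z (m : int) : R := m%:~R * theta.
Definition fq (t : nat) (n : int) : R := Fd t (z (n + 1)) - Fd t (z n).

Definition Cm (t : nat) : R := minR [set y | forall x, Cfun t y <= Cfun t x].
Definition n0 (t : nat) : int := xget 0 [set n | z n < Cm t <= z (n + 1)].
Definition SU (t : nat) : R :=
  z (minZ [set m | Cm t <= z m /\ Cfun t (z (n0 t)) + K t < Cfun t (z m)]).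

Record stage := Stage {
  Hf : R -> R;
  Sv : R;
  sv : R;
  Iv : R;        (* I_t (unused dummy value at t = T-1) *)
  Ibv : R
}.

Definition Vf (st : stage) (Kt : R) (y : R) : R :=
  if y < sv st then Hf st (Sv st) + Kt else Hf st y.

Definition sT1 : R :=
  xget 0 [set x | x <= Cm T.-1 /\ Cfun T.-1 x = Cfun T.-1 (Cm T.-1) + K T.-1].

Definition stage_last : stage :=
  Stage (Cfun T.-1) (Cm T.-1) sT1 sT1 sT1.

(* H_t(y) = C_t(y) + alpha * sum_{n >= -1} V_{t+1}(y - z_n) f_t(n) *)
Definition Hnext (t : nat) (st1 : stage) (y : R) : R :=
  Cfun t y + alpha *
    limn (series (fun k : nat =>
      Vf st1 (K t.+1) (y - z (k%:Z - 1)) * fq t (k%:Z - 1))).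

Definition step (t : nat) (st1 : stage) : stage :=
  let It := z (maxZ [set m | z m < Num.min (Ibv st1 - theta) (Cm t)]) in
  let Ibt := z (maxZ [set m | z m <= It /\ Cfun t It + K t < Cfun t (z m)])
             + theta in
  let Ht := Hnext t st1 in
  let St := z (maxZ [set m | It <= z m <= SU t /\
                 forall n, It <= z n <= SU t -> Ht (z m) <= Ht (z n)]) in
  let st := if K t == 0 then St
            else z (minZ [set m | Ibt <= z m <= St /\ Ht (z m) <= Ht St + K t]) in
  Stage Ht St st It Ibt.

(* stage_rec k = data of period T-1-k *)
Fixpoint stage_rec (k : nat) : stage :=
  match k with
  | 0 => stage_last
  | k'.+1 => step (T.-1 - k'.+1) (stage_rec k')
  end.

Definition stageAt (t : nat) : stage := stage_rec (T.-1 - t).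

End Model.

Definition mutually_independent {R : realType} {d} {Omega : measurableType d}
  (P : probability Omega R) (n : nat) (D : nat -> {RV P >-> R}) : Prop :=
  forall (I : seq nat) (B : nat -> set R),
    uniq I -> all (fun i => (i < n)%N) I -> (forall i, measurable (B i)) ->
    fine (P [set w | forall i, i \in I -> B i (D i w)]) =
    \prod_(i <- I) fine (P [set w | B i (D i w)]).

Definition convex_fun {R : realType} (f : R -> R) : Prop :=
  forall x y l, 0 <= l <= 1 -> f (l * x + (1 - l) * y) <= l * f x + (1 - l) * f y.

Definition coercive {R : realType} (f : R -> R) : Prop :=
  forall M, exists N, forall y, N < `|y| -> M < f y.

(* Main.v *)
Require Import Defs.
From HB Require Import structures.
From mathcomp Require Import all_boot all_order all_algebra.
From mathcomp Require Import all_classical all_reals all_analysis.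
From mathcomp Require Import zify ring lra.
Set Implicit Arguments. Unset Strict Implicit. Unset Printing Implicit Defensive.
Import Order.TTheory GRing.Theory Num.Theory.
Import numFieldNormedType.Exports.
Local Open Scope classical_set_scope.
Local Open Scope ring_scope.

Lemma maxZ_spec (A : set int) (B : int) : (exists m, A m) ->
  (forall m, A m -> m <= B) -> A (maxZ A) /\ forall n, A n -> n <= maxZ A.
Proof.
move=> [m0 Am0] hB.
have ex : exists n : nat, `[< A (B - n%:Z) >].
  exists `|B - m0|%N; apply/asboolP.
  have -> : B - `|B - m0|%N%:Z = m0 by have := hB _ Am0; lia.
  done.
case: (ex_minnP ex) => n /asboolP An minn.
rewrite /maxZ; apply: (@xgetI _ 0 [set m | A m /\ forall k, A k -> (k <= m)%R] (B - n%:Z)); split => // k Ak.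
have := minn `|B - k|%N; have := hB _ Ak => hk.
have -> : B - `|B - k|%N%:Z = k by lia.
move=> /(_ (asboolT Ak)); lia.
Qed.

Lemma minZ_spec (A : set int) (B : int) : (exists m, A m) ->
  (forall m, A m -> B <= m) -> A (minZ A) /\ forall n, A n -> minZ A <= n.
Proof.
move=> [m0 Am0] hB.
have ex : exists n : nat, `[< A (B + n%:Z) >].
  exists `|m0 - B|%N; apply/asboolP.
  have -> : B + `|m0 - B|%N%:Z = m0 by have := hB _ Am0; lia.
  done.
case: (ex_minnP ex) => n /asboolP An minn.
rewrite /minZ; apply: (@xgetI _ 0 [set m | A m /\ forall k, A k -> (m <= k)%R] (B + n%:Z)); split => // k Ak.
have := minn `|k - B|%N; have := hB _ Ak => hk.
have -> : B + `|k - B|%N%:Z = k by lia.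
move=> /(_ (asboolT Ak)); lia.
Qed.

Section Grid.
Variables (R : realType) (theta : R).
Hypothesis th0 : 0 < theta.

Lemma z_le m n : (z theta m <= z theta n) = (m <= n).
Proof. by rewrite /z ler_pM2r // ler_int. Qed.

Lemma z_lt m n : (z theta m < z theta n) = (m < n).
Proof. by rewrite /z ltr_pM2r // ltr_int. Qed.

Lemma z_add1 m : z theta (m + 1) = z theta m + theta.
Proof. by rewrite /z intrD mulrDl mul1r. Qed.

Lemma zn (n : nat) : z theta n%:Z = n%:R * theta.
Proof. by []. Qed.

Lemma zNn (n : nat) : z theta (- n%:Z) = - (n%:R * theta).
Proof. by rewrite /z mulrNz mulNr. Qed.

Lemma arch_th (x : R) : exists n : nat, x < n%:R * theta.
Proof.
have h0 : 0 <= `|x| / theta by rewrite divr_ge0 // ltW.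
exists (Num.Def.archi_bound (`|x| / theta)).
have := archi_boundP h0; rewrite ltr_pdivrMr // => h.
by apply: le_lt_trans h; rewrite ler_norm.
Qed.

Lemma zbound_above (Y : R) : exists B : int, forall m, z theta m <= Y -> m <= B.
Proof.
have [n hn] := arch_th Y; exists n%:Z => m hm.
rewrite -z_le; apply: (le_trans hm); rewrite zn; exact: ltW.
Qed.

Lemma zbound_below (Y : R) : exists B : int, forall m, Y <= z theta m -> B <= m.
Proof.
have [n hn] := arch_th (- Y); exists (- n%:Z) => m hm.
rewrite -z_le; apply: (le_trans _ hm); rewrite zNn.
rewrite lerNl; exact: ltW.
Qed.

Lemma z_far_below (Y N : R) : exists m, z theta m <= Y /\ N < `|z theta m|.
Proof.
have [n hn] := arch_th (`|N| + `|Y|).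
have hY := ler_norm Y; have hY' : - Y <= `|Y| by rewrite -normrN ler_norm.
exists (- n%:Z); rewrite zNn normrN.
have hp : 0 <= n%:R * theta by rewrite mulr_ge0 // ltW.
rewrite ger0_norm //; have hN := ler_norm N; have := normr_ge0 N; have := normr_ge0 Y; split; lra.
Qed.

Lemma z_far_above (Y N : R) : exists m, Y <= z theta m /\ N < `|z theta m|.
Proof.
have [n hn] := arch_th (`|N| + `|Y|).
have hY := ler_norm Y; exists n%:Z; rewrite zn.
have hp : 0 <= n%:R * theta by rewrite mulr_ge0 // ltW.
rewrite ger0_norm //; have hN := ler_norm N; have := normr_ge0 Y; have := normr_ge0 N; split; lra.
Qed.
End Grid.

Lemma int_argmin {R : realType} (f : int -> R) (a b : int) : a <= b ->
  exists m, a <= m <= b /\ forall n, a <= n <= b -> f m <= f n.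
Proof.
move=> hab.
suff H : forall k : nat, exists m, a <= m <= a + k%:Z /\
   forall n, a <= n <= a + k%:Z -> f m <= f n.
  have [m [hm1 hm2]] := H `|b - a|%N.
  have e : a + `|b - a|%N%:Z = b by lia.
  by rewrite e in hm1 hm2; exists m.
elim=> [|k [m [hm hmin]]].
  exists a; split; first lia.
  by move=> n hn; have -> : n = a by lia.
case: (leP (f m) (f (a + k.+1%:Z))) => hf.
  exists m; split; first lia.
  move=> n hn; have [hn'|hn'] : n <= a + k%:Z \/ n = a + k.+1%:Z by lia.
    by apply: hmin; lia.
  by rewrite hn'.
exists (a + k.+1%:Z); split; first lia.
move=> n hn; have [hn'|hn'] : n <= a + k%:Z \/ n = a + k.+1%:Z by lia.
  apply: le_trans (ltW hf) _; apply: hmin; lia.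
by rewrite hn'.
Qed.

Lemma step_props R d (Omega : measurableType d) (P : probability Omega R)
  alpha theta c K G (D : nat -> {RV P >-> R}) t st1 :
  0 < theta -> 0 <= K t -> coercive (Cfun alpha c G D t) ->
  let st := step alpha theta c K G D t st1 in
  [/\ Iv st < Ibv st1 - theta,
      Ibv st - theta <= Iv st,
      Cfun alpha c G D t (Iv st) + K t < Cfun alpha c G D t (Ibv st - theta)
    & Ibv st <= sv st].
Proof.
move=> th0 K0 coer st; rewrite /st /step /=.
set C := Cfun alpha c G D t.
set Y1 := Num.min _ _.
set i := maxZ _.
have [B1 hB1] := zbound_above th0 Y1.
have ne1 : exists m, [set m | z theta m < Y1] m.
  have [m [hm _]] := z_far_below th0 (Y1 - 1) 0; exists m => /=; lra.
have Ai : z theta i < Y1.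
  by have [] := maxZ_spec ne1 (fun m h => hB1 m (ltW h)).
move: Ai; rewrite lt_min => /andP [hi1 hi2].
set j := maxZ _.
have ne2 : exists m, [set m | z theta m <= z theta i /\
    C (z theta i) + K t < C (z theta m)] m.
  have [N hN] := coer (C (z theta i) + K t).
  have [m [hm1 hm2]] := z_far_below th0 (z theta i) N.
  by exists m; split => //; exact: hN.
have [B2 hB2] := zbound_above th0 (z theta i).
have [[Aj1 Aj2] _] := maxZ_spec ne2 (fun m h => hB2 m h.1).
have Aj1' : z theta j <= z theta i := Aj1.
have Aj2' : C (z theta i) + K t < C (z theta j) := Aj2.
have ji : z theta j + theta <= z theta i.
  rewrite -z_add1 // z_le //.
  have : j <= i by rewrite -(z_le th0).
  have : j != i by apply/eqP => e; rewrite e in Aj2'; lra.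
  lia.
split; [done | lra | by rewrite addrK |].
have [u [eSU hu]] : exists u, SU alpha theta c K G D t = z theta u /\
    Cm alpha c G D t <= z theta u.
  rewrite /SU; set A4 := (X in minZ X).
  have ne4 : exists m, A4 m.
    have [N hN] := coer (Cfun alpha c G D t (z theta (n0 alpha theta c G D t)) + K t).
    have [m [hm1 hm2]] := z_far_above th0 (Cm alpha c G D t) N.
    by exists m; split => //; exact: hN.
  have [B4 hB4] := zbound_below th0 (Cm alpha c G D t).
  have [[h _] _] := minZ_spec ne4 (fun m h => hB4 m h.1).
  by eexists; split; first reflexivity.
rewrite eSU.
have iu : i <= u by rewrite -(z_le th0); lra.
set A3 := (X in maxZ X).
have ne3 : exists m, A3 m.
  have [m [hm hmin]] := int_argmin (fun m => Hnext alpha theta c K G D t st1 (z theta m)) iu.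
  exists m; split; first by rewrite !z_le.
  by move=> n; rewrite !z_le // => hn; exact: hmin.
have [B3 hB3] := zbound_above th0 (z theta u).
have [[/andP [hs1 hs2] _] _] := maxZ_spec ne3 (fun m h => hB3 m (elimT andP h.1).2).
set s := maxZ A3.
have hs1' : z theta i <= z theta s := hs1.
case: ifP => _; first lra.
set A5 := (X in minZ X).
have ne5 : exists m, A5 m.
  exists s; split; first by apply/andP; split => //; lra.
  by rewrite lerDl.
have [B5 hB5] := zbound_below th0 (z theta j + theta).
have [[/andP [h _] _] _] := minZ_spec ne5 (fun m h => hB5 m (elimT andP h.1).1).
exact: h.
Qed.

Theorem lemma4p4 (R : realType) (d : measure_display) (Omega : measurableType d)
  (P : probability Omega R)
  (T : nat) (alpha theta : R) (c K : nat -> R) (G : nat -> R -> R)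
  (D : nat -> {RV P >-> R}) :
  (2 <= T)%N ->
  0 < alpha <= 1 ->
  0 < theta ->
  (forall t, (t < T)%N -> 0 <= K t) ->
  (forall t, (t < T)%N -> P [set w | D t w < 0] = 0%E) ->
  (forall t, (t < T)%N -> P.-integrable setT (EFin \o D t)) ->
  mutually_independent T D ->
  (forall t, (t < T)%N -> convex_fun (Cfun alpha c G D t)) ->
  (forall t, (t < T)%N -> coercive (Cfun alpha c G D t)) ->
  (forall t, (t <= T - 2)%N -> alpha * K t.+1 <= K t) ->
  forall t, (t <= T - 2)%N ->
    let st := stageAt T alpha theta c K G D t in
    Hf st (Ibv st - theta) > Hf st (Iv st) + K t.
Proof.
move=> T2 _ th0 K0 _ _ _ _ coer _ t tT; cbv zeta.
set st := stageAt T alpha theta c K G D t.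
have tT' : (t < T)%N by lia.
set st1 := stageAt T alpha theta c K G D t.+1.
have e : st = step alpha theta c K G D t st1.
  rewrite /st /st1 /stageAt.
  have -> : (T.-1 - t = (T.-1 - t.+1).+1)%N by lia.
  rewrite [LHS]/=; congr step; lia.
have hs1 : Ibv st1 <= sv st1.
  have [eT|neT] := eqVneq t.+1 T.-1.
    by rewrite /st1 /stageAt eT subnn /=.
  have e1 : st1 = step alpha theta c K G D t.+1 (stageAt T alpha theta c K G D t.+2).
    rewrite /st1 /stageAt.
    have -> : (T.-1 - t.+1 = (T.-1 - t.+2).+1)%N by lia.
    rewrite [LHS]/=; congr step; lia.
  rewrite e1.
  have [_ _ _ h] := @step_props _ _ _ _ alpha theta c K G D t.+1 (stageAt T alpha theta c K G D t.+2)
    th0 (K0 t.+1 ltac:(lia)) (coer t.+1 ltac:(lia)).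
  exact: h.
have [h1 h2 h3 _] := @step_props _ _ _ _ alpha theta c K G D t st1 th0 (K0 t tT') (coer t tT').
rewrite -e in h1 h2 h3.
have hH : Hf st = Hnext alpha theta c K G D t st1 by rewrite e.
have key : forall y, y <= Iv st -> Hnext alpha theta c K G D t st1 y =
   Cfun alpha c G D t y + alpha * limn (series (fun k : nat =>
     (Hf st1 (Sv st1) + K t.+1) * fq theta D t (k%:Z - 1))).
  move=> y hy; rewrite /Hnext.
  suff -> : (fun k : nat => Vf st1 (K t.+1) (y - z theta (k%:Z - 1)) *
     fq theta D t (k%:Z - 1)) = (fun k : nat =>
     (Hf st1 (Sv st1) + K t.+1) * fq theta D t (k%:Z - 1)) by [].
  apply: funext => k; congr (_ * _); rewrite /Vf ifT //.
  have hk : z theta (k%:Z - 1) + theta = z theta k%:Z by rewrite -z_add1 // subrK.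
  have : 0 <= z theta k%:Z by rewrite zn mulr_ge0 // ltW.
  lra.
rewrite hH (key _ h2) (key _ (lexx _)).
lra.
Qed.
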